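(* Let $m\ge 2$ and let $F_m$ be the free group with basis $a_1,\dots,a_m$. Define $$\Delta_{F_m}(\mathbf z)=\sum_{g\in F_m} z_1^{|g|_{a_1^{\epsilon}}}\cdots z_m^{|g|_{a_m^{\epsilon}}},\qquad \mathbf z=(z_1,\dots,z_m),$$ where $|g|_{a_i^{\epsilon}}=|g|_{a_i}+|g|_{a_i^{-1}}$ is the total number of occurrences of $a_i$ and $a_i^{-1}$ in the freely reduced word representing $g$. Then $$\Delta_{F_m}(\mathbf z)=\frac{(1+z_1)\cdots(1+z_m)}{R(\mathbf z)},\qquad R(\mathbf z)=1-\sum_{l=1}^{m}(2l-1)\sum_{1\le i_1<\dots<i_l\le m} z_{i_1}\cdots z_{i_l}.$$
   Context: Identity of formal power series in $z_1,\dots,z_m$ (equivalently, of analytic functions near $\mathbf 0$). *)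

(* Defs.v *)
From HB Require Import structures.
From mathcomp Require Import all_boot all_order all_algebra.
Set Implicit Arguments. Unset Strict Implicit. Unset Printing Implicit Defensive.
Import GRing.Theory Num.Theory.
Local Open Scope ring_scope.

Definition multi (m : nat) := {ffun 'I_m -> nat}.
Definition mdeg m (k : multi m) : nat := (\sum_(i < m) k i)%N.

Definition fps (m : nat) := multi m -> int.

Definition fps_zero (m : nat) : fps m := fun _ => 0.
Definition fps_add m (f g : fps m) : fps m := fun k => f k + g k.
Definition fps_scale m (c : int) (f : fps m) : fps m := fun k => c * f k.
(* Cauchy product: (fg)_k = sum_{j <= k} f_j g_{k-j}; each j_i <= k_i <= mdeg k *)
Definition fps_mul m (f g : fps m) : fps m := fun k =>
  \sum_(j : {ffun 'I_m -> 'I_(mdeg k).+1} | [forall i, (j i <= k i)%N])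
     f [ffun i => (j i : nat)] * g [ffun i => (k i - j i)%N].
Definition fps_mono m (e : multi m) : fps m := fun k => (k == e)%:R.
Definition fps_one m : fps m := @fps_mono m [ffun _ => 0%N].
Arguments fps_one m : clear implicits.
Arguments fps_zero m : clear implicits.
Definition fps_var m (i : 'I_m) : fps m := fps_mono [ffun j => nat_of_bool (j == i)].

Definition numer m : fps m :=
  \big[@fps_mul m/fps_one m]_(i < m) @fps_add m (fps_one m) (@fps_var m i).

Definition R_series m : fps m :=
  @fps_add m (fps_one m)
   (@fps_scale m (-1)
     (\big[@fps_add m/fps_zero m]_(1 <= l < m.+1)
        @fps_scale m ((2 * l - 1)%N)%:R
          (\big[@fps_add m/fps_zero m]_(S : {set 'I_m} | #|S| == l)
              \big[@fps_mul m/fps_one m]_(i in S) @fps_var m i))).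

(* Free group F_m modelled by its normal forms: freely reduced words over the
   letters a_i^{+1} = (i, false), a_i^{-1} = (i, true). *)
Definition letter (m : nat) := ('I_m * bool)%type.
Fixpoint reduced m (w : seq (letter m)) : bool :=
  match w with
  | x :: ((y :: _) as t) => ~~ ((x.1 == y.1) && (x.2 != y.2)) && reduced t
  | _ => true
  end.
Definition occ m (i : 'I_m) (w : seq (letter m)) : nat := count (fun x => x.1 == i) w.

(* Delta_{F_m}: coefficient of z^k = number of g in F_m with (|g|_{a_i^eps})_i = k;
   such reduced words have length mdeg k. *)
Definition Delta m : fps m := fun k =>
  (#|[set w : (mdeg k).-tuple (letter m) |
        reduced (tval w) && [forall i, occ i (tval w) == k i]]|)%:R.
Arguments Delta m : clear implicits.
Arguments R_series m : clear implicits.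
Arguments numer m : clear implicits.

(* Main.v *)
Require Import Defs.
From mathcomp Require Import all_boot all_order all_algebra.
From mathcomp Require Import ring zify.
Set Implicit Arguments. Unset Strict Implicit. Unset Printing Implicit Defensive.


Lemma sum_tupleS (T : finType) n (F : seq T -> nat) :
  \sum_(w : n.+1.-tuple T) F (tval w) =
  \sum_(x : T) \sum_(w : n.-tuple T) F (x :: tval w).
Proof.
rewrite pair_big /=.
rewrite (reindex (fun p : T * n.-tuple T => [tuple of p.1 :: p.2])) /=.
  by apply: eq_bigr => -[x w].
exists (fun w : n.+1.-tuple T => (thead w, [tuple of behead w])).
  by move=> [x w] _ /=; congr pair; apply: val_inj.
by move=> w _; case/tupleP: w => x w /=; apply: val_inj.
Qed.

Definition occv m (w : seq (letter m)) : multi m := [ffun i => occ i w].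
Definition htype m (w : seq (letter m)) (i : 'I_m) : bool :=
  if w is x :: _ then x.1 == i else false.
Definition nb m (x : letter m) (w : seq (letter m)) : bool :=
  if w is y :: _ then ~~ ((x.1 == y.1) && (x.2 != y.2)) else true.

Lemma reduced_cons m (x : letter m) w : reduced (x :: w) = nb x w && reduced w.
Proof. by case: w. Qed.

Definition Dn m n (k : multi m) : nat :=
  \sum_(w : n.-tuple (letter m)) (reduced w && (occv w == k)).
Definition En m (i : 'I_m) n (k : multi m) : nat :=
  \sum_(w : n.-tuple (letter m)) [&& reduced w, occv w == k & htype w i].

Definition zm m : multi m := [ffun _ => 0%N].
Definition dec m (k : multi m) (i : 'I_m) : multi m := [ffun j => k j - (j == i)].

Lemma Dn0 m (k : multi m) : Dn 0 k = (k == zm m).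
Proof.
rewrite /Dn (big_pred1 [tuple]) => [|w]; last by apply/esym/eqP; apply: val_inj; case: w => -[].
rewrite /=; congr nat_of_bool; apply/eqP/eqP => H; apply/ffunP => i; move/ffunP: H => /(_ i); rewrite !ffunE //.
Qed.

Lemma DnS m n (k : multi m) : Dn n.+1 k = \sum_i En i n.+1 k.
Proof.
rewrite /Dn /En exchange_big /=; apply: eq_bigr => w _.
case/tupleP: w => x w /=.
rewrite (bigD1 x.1) //= eqxx andbT big1 ?addn0 // => j /negbTE; rewrite eq_sym => ne.
by rewrite /htype /= eq_sym ne !andbF.
Qed.

Lemma En0 m (i : 'I_m) n (k : multi m) : k i = 0%N -> En i n k = 0%N.
Proof.
move=> ki; rewrite /En big1 // => w _.
rewrite /htype; case: w => [[|x w] /= _]; rewrite ?andbF //.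
case: (x.1 =P i) => xi; rewrite ?andbF //.
case E: (occv _ == k); rewrite ?andbF //.
by move/eqP/ffunP: E => /(_ i); rewrite ffunE /occ /= xi eqxx ki.
Qed.


Lemma occv_cons m (x : letter m) w (k : multi m) :
  (occv (x :: w) == k) = (0 < k x.1) && (occv w == dec k x.1).
Proof.
apply/eqP/andP => [H|[kx /eqP H]].
  have Hj j : k j = (x.1 == j) + occ j w.
    by rewrite -H ffunE.
  split; first by rewrite Hj eqxx.
  by apply/eqP/ffunP => j; rewrite !ffunE Hj eq_sym; case: (j == x.1); rewrite ?subn0 ?addKn.
apply/ffunP => j; have := congr1 (fun f : multi m => f j) H; rewrite !ffunE /occ /= => ->.
case: (x.1 =P j) => [<-|/eqP ne]; last by rewrite eq_sym (negbTE ne) subn0.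
by rewrite eqxx add1n subn1 prednK.
Qed.

Lemma sum_letter m (G : letter m -> nat) :
  \sum_(x : letter m) G x = \sum_(j : 'I_m) \sum_(s : bool) G (j, s).
Proof. by rewrite pair_big; apply: eq_bigr => -[]. Qed.

Lemma pt m (i : 'I_m) (b : bool) (w : seq (letter m)) :
  (nb (i, true) w && b) + (nb (i, false) w && b) + (b && htype w i) = 2 * b.
Proof.
case: b; rewrite ?andbF ?andbT //.
case: w => [|[j s] t] //=.
by case: (i =P j) => [->|ne]; rewrite /= ?eqxx; case: s => //=; case: (j =P i) => //= /esym.
Qed.

Lemma En_rec m (i : 'I_m) n (k : multi m) : 0 < k i ->
  (En i n.+1 k + En i n (dec k i) = 2 * Dn n (dec k i))%N.
Proof.
move=> ki; rewrite /En /Dn (@sum_tupleS _ n (fun w => [&& reduced w, occv w == k & htype w i])) sum_letter (bigD1 i) // [X in _ + X + _]big1 ?addn0; last first.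
  move=> j /negbTE ne; apply: big1 => s _; apply: big1 => w _.
  by rewrite /htype /= ne !andbF.
rewrite big_bool big_distrr -!big_split; apply: eq_bigr => w _.
rewrite !reduced_cons !occv_cons /= ki /= /htype /= eqxx !andbT -!andbA.
by rewrite -(pt i (reduced w && (occv w == dec k i)) w) /htype -!andbA.
Qed.


Definition Dt m (k : multi m) := Dn (mdeg k) k.
Definition Et m (i : 'I_m) (k : multi m) := En i (mdeg k) k.

Lemma mdeg_dec m (k : multi m) i : 0 < k i -> mdeg k = (mdeg (dec k i)).+1.
Proof.
move=> ki; rewrite /mdeg (bigD1 i) //= [in RHS](bigD1 i) //= ffunE eqxx subn1.
rewrite -addSn prednK //; congr addn; apply: eq_bigr => j /negbTE ne.
by rewrite ffunE ne subn0.
Qed.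

Lemma mdeg0 m (k : multi m) : mdeg k = 0 -> k = zm m.
Proof.
move=> /eqP; rewrite /mdeg sum_nat_eq0 => /forallP H.
by apply/ffunP => i; rewrite ffunE; apply/eqP; have := H i; rewrite implyTb.
Qed.

Lemma Dt_split m (k : multi m) : Dt k = ((k == zm m) + \sum_i Et i k)%N.
Proof.
rewrite /Dt /Et; case E: (mdeg k) => [|n].
  rewrite Dn0 (mdeg0 E) eqxx big1 // => i _; apply: En0; by rewrite ffunE.
rewrite DnS; have -> : (k == zm m) = false => //.
by apply/negbTE/eqP => H; move: E; rewrite H /mdeg big1 // => i _; rewrite ffunE.
Qed.

Lemma Et_rec m (k : multi m) i : 0 < k i ->
  (Et i k + Et i (dec k i) = 2 * Dt (dec k i))%N.
Proof. by move=> ki; rewrite /Et /Dt (mdeg_dec ki) En_rec. Qed.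

Lemma Et0 m (k : multi m) i : k i = 0%N -> Et i k = 0%N.
Proof. exact: En0. Qed.


Definition supp m (k : multi m) : {set 'I_m} := [set i | 0 < k i].
Definition sub m (k : multi m) (S : {set 'I_m}) : multi m := [ffun j => k j - (j \in S)].

Lemma sub_dec m (k : multi m) (T : {set 'I_m}) i : i \notin T -> dec (sub k T) i = sub k (i |: T).
Proof.
move=> iT; apply/ffunP => j; rewrite !ffunE in_setU1 -subnDA.
case: (j =P i) => [->|]; by rewrite ?(negbTE iT) ?addn0 ?add0n.
Qed.

Lemma sub_i m (k : multi m) (T : {set 'I_m}) i : i \notin T -> sub k T i = k i.
Proof. by move=> iT; rewrite ffunE (negbTE iT) subn0. Qed.

Lemma reidx m (U : {set 'I_m}) i (F : {set 'I_m} -> nat) : i \in U ->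
  \sum_(S : {set 'I_m} | (S \subset U) && (i \in S)) F S =
  \sum_(T : {set 'I_m} | (T \subset U) && (i \notin T)) F (i |: T).
Proof.
move=> iU.
rewrite (reindex_onto (fun T => i |: T) (fun S => S :\ i)); last first.
  by move=> S /andP[_ iS]; rewrite setD1K.
apply: eq_bigl => T; rewrite setU11 andbT subUset sub1set iU /=.
case iT: (i \in T); rewrite ?andbF ?andbT //=.
  case: eqP; rewrite ?andbF // => H; have := setD11 i (i |: T).
  by rewrite H iT.
by rewrite setU1K ?iT ?eqxx ?andbT.
Qed.

Lemma per_i m (k : multi m) i :
  (2 * \sum_(S : {set 'I_m} | (S \subset supp k) && (i \in S)) Dt (sub k S) =
   \sum_(S : {set 'I_m} | S \subset supp k) Et i (sub k S))%N.
Proof.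
case: (posnP (k i)) => ki.
  rewrite big1 ?muln0; last first.
    by move=> S /andP[/subsetP H /H]; rewrite inE ki.
  by rewrite big1 // => S _; apply: Et0; rewrite ffunE ki.
have iU : i \in supp k by rewrite inE.
rewrite [in RHS](bigID (fun S : {set 'I_m} => i \in S)) /= reidx // big_distrr /=.
rewrite (reidx (fun S => Et i (sub k S))) // -big_split /=.
apply: eq_bigr => T /andP[_ iT].
by rewrite -sub_dec // addnC Et_rec // sub_i.
Qed.

Lemma zero_claim m (k : multi m) :
  \sum_(S : {set 'I_m} | S \subset supp k) (sub k S == zm m) = [forall i, k i <= 1].
Proof.
rewrite (bigD1 (supp k)) //= big1 ?addn0; last first.
  move=> S /andP[SU neq]; apply/eqP; rewrite eqb0; apply/eqP => /ffunP H.
  have : ~~ (supp k \subset S) by move: neq; rewrite eqEsubset SU.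
  case/subsetPn => j; rewrite inE => kj jS.
  by have := H j; rewrite !ffunE (negbTE jS) subn0 => E; rewrite E in kj.
congr nat_of_bool; apply/eqP/forallP => [H j|H].
  have := congr1 (fun f : multi m => f j) H; rewrite !ffunE inE.
  by case: (k j) => [|[|n]].
apply/ffunP => j; rewrite !ffunE inE; have := H j.
by case: (k j) => [|[|n]].
Qed.

Lemma nat_main m (k : multi m) :
  (2 * \sum_(S : {set 'I_m} | S \subset supp k) #|S| * Dt (sub k S) + [forall i, k i <= 1]
   = \sum_(S : {set 'I_m} | S \subset supp k) Dt (sub k S))%N.
Proof.
have card_claim : \sum_(S : {set 'I_m} | S \subset supp k) #|S| * Dt (sub k S) =
   \sum_i \sum_(S : {set 'I_m} | (S \subset supp k) && (i \in S)) Dt (sub k S).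
  rewrite [LHS](eq_bigr (fun S : {set 'I_m} => \sum_i (if i \in S then Dt (sub k S) else 0%N))); last first.
    by move=> S _; rewrite -big_mkcond sum_nat_const.
  rewrite exchange_big /=; apply: eq_bigr => i _.
  by rewrite big_mkcondr.
rewrite card_claim big_distrr /=.
under eq_bigr => i _ do rewrite per_i.
rewrite exchange_big /= -zero_claim addnC -big_split /=.
by apply: eq_bigr => S _; rewrite Dt_split.
Qed.

Import GRing.Theory Num.Theory.
Local Open Scope ring_scope.


Definition kminus m (k a : multi m) : multi m := [ffun i => (k i - a i)%N].
Definition kle m (a k : multi m) : bool := [forall i, (a i <= k i)%N].

Lemma le_mdeg m (k : multi m) i : (k i <= mdeg k)%N.
Proof. by rewrite /mdeg (bigD1 i) //= leq_addr. Qed.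

Lemma fps_mul_addl m (f g h : fps m) k :
  fps_mul (fps_add f g) h k = fps_mul f h k + fps_mul g h k.
Proof. by rewrite /fps_mul -big_split; apply: eq_bigr => j _; rewrite /fps_add mulrDl. Qed.

Lemma mul_mono_l m (a : multi m) (f : fps m) k :
  fps_mul (fps_mono a) f k = if kle a k then f (kminus k a) else 0.
Proof.
rewrite /fps_mul /fps_mono; case: ifP => H.
  pose j0 : {ffun 'I_m -> 'I_(mdeg k).+1} := [ffun i => inord (a i)].
  have j0E i : (j0 i : nat) = a i.
    rewrite ffunE inordK // ltnS; apply: leq_trans (le_mdeg k i).
    by move/forallP: H => /(_ i).
  clearbody j0.
  have j0a : [ffun i => (j0 i : nat)] = a by apply/ffunP => i; rewrite ffunE j0E.
  rewrite (bigD1 j0) /=; last first.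
    apply/forallP => i; rewrite (leq_trans (eq_leq (j0E i))) //; by move/forallP: H => /(_ i).
  rewrite big1 ?addr0.
    rewrite j0a eqxx mul1r; congr f; apply/ffunP => i; rewrite !ffunE j0E //.
  move=> j /andP[_ ne]; case: eqP; rewrite ?mul0r // => E.
  case/eqP: ne; apply/ffunP => i; apply: ord_inj; rewrite j0E -E ffunE //.
rewrite big1 // => j Hj; case: eqP; rewrite ?mul0r // => E.
move: H; rewrite -E; move/negbT => /negP; case; apply/forallP => i.
by rewrite ffunE; move/forallP: Hj => /(_ i).
Qed.


Lemma eq_multi m (f g : multi m) : (f == g) = [forall j, f j == g j].
Proof. by apply/eqP/forallP => [->|H] // ; apply/ffunP => j; apply/eqP. Qed.

Lemma forall_split m (x : 'I_m) (P Q : pred 'I_m) :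
  (forall i, i != x -> P i = Q i) -> [forall i, P i] = P x && [forall i, (i != x) ==> Q i].
Proof.
move=> H; apply/forallP/andP => [A|[A /forallP B] i].
  by split => //; apply/forallP => i; apply/implyP => ne; rewrite -H.
by case: (i =P x) => [->|/eqP ne] //; rewrite H //; move/implyP: (B i); apply.
Qed.

Lemma fps_one_val m (k : multi m) : fps_one m k = (k == [ffun _ => 0%N])%:R.
Proof. by []. Qed.

Lemma numer_gen m (r : seq 'I_m) k : uniq r ->
  (\big[@fps_mul m/fps_one m]_(i <- r) @fps_add m (fps_one m) (@fps_var m i)) k
   = ([forall i, (k i <= (i \in r))%N])%:R.
Proof.
elim: r k => [|x r IH] k /=.
  move=> _; rewrite big_nil fps_one_val eq_multi; congr (_%:R); congr nat_of_bool.
  by apply: eq_forallb => i; rewrite ffunE leqn0.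
case/andP => xr ur; rewrite big_cons fps_mul_addl /fps_one /fps_var !mul_mono_l.
rewrite !IH //.
have kle0 : kle [ffun _ => 0%N] k by apply/forallP => i; rewrite ffunE.
rewrite kle0.
have -> : kminus k [ffun _ => 0%N] = k by apply/ffunP => i; rewrite !ffunE subn0.
have kx : kle [ffun j => nat_of_bool (j == x)] k = (0 < k x)%N.
  rewrite /kle (forall_split (x := x) (Q := xpredT)) ?ffunE ?eqxx; last first.
    by move=> i ne; rewrite ffunE (negbTE ne).
  have -> : [forall i, (i != x) ==> true] by apply/forallP => i; rewrite implybT.
  by rewrite andbT.
rewrite kx.
rewrite (forall_split (x := x) (Q := fun i => (k i <= (i \in r))%N)) //.
rewrite [in RHS](forall_split (x := x) (Q := fun i => (k i <= (i \in r))%N)); last first.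
  by move=> i ne; rewrite in_cons (negbTE ne).
rewrite (negbTE xr) in_cons eqxx /=.
have -> : [forall i, (kminus k [ffun j => nat_of_bool (j == x)] i <= (i \in r))%N]
   = ((k x - 1)%N <= 0)%N && [forall i, (i != x) ==> (k i <= (i \in r))%N].
  rewrite (forall_split (x := x) (Q := fun i => (k i <= (i \in r))%N)).
    by rewrite !ffunE eqxx (negbTE xr).
  by move=> i ne; rewrite !ffunE (negbTE ne) subn0.
case: [forall i, (i != x) ==> (k i <= (i \in r))%N];
case: (k x) => [|[|n]] /=; rewrite ?add0r ?addr0 //.
Qed.

Lemma numer_val m (k : multi m) : numer m k = ([forall i, (k i <= 1)%N])%:R.
Proof.
rewrite /numer numer_gen ?index_enum_uniq //.
by congr (_%:R); congr nat_of_bool; apply: eq_forallb => i; rewrite mem_index_enum.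
Qed.

Lemma kle_var m (x : 'I_m) (k : multi m) :
  kle [ffun j => nat_of_bool (j == x)] k = (0 < k x)%N.
Proof.
rewrite /kle (forall_split (x := x) (Q := xpredT)) ?ffunE ?eqxx; last first.
  by move=> i ne; rewrite ffunE (negbTE ne).
have -> : [forall i, (i != x) ==> true] by apply/forallP => i; rewrite implybT.
by rewrite andbT.
Qed.

Lemma prodvar_gen m (P : pred 'I_m) (r : seq 'I_m) k : uniq r ->
  (\big[@fps_mul m/fps_one m]_(i <- r | P i) @fps_var m i) k
   = (k == [ffun j => nat_of_bool ((j \in r) && P j)])%:R.
Proof.
elim: r k => [|x r IH] k /=.
  move=> _; rewrite big_nil fps_one_val; congr (_%:R); congr (_ == _).
case/andP => xr ur; rewrite big_cons; case: ifP => Px; last first.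
  rewrite IH //; congr (_%:R); congr (_ == _); apply/ffunP => j; rewrite !ffunE in_cons.
  by case: (j =P x) => [->|] //=; rewrite Px (negbTE xr).
rewrite /fps_var mul_mono_l kle_var IH //.
rewrite !eq_multi (forall_split (x := x)
   (Q := fun j => k j == [ffun j => nat_of_bool ((j \in r) && P j)] j)); last first.
  by move=> i ne; rewrite !ffunE (negbTE ne) subn0.
rewrite [in RHS](forall_split (x := x)
   (Q := fun j => k j == [ffun j => nat_of_bool ((j \in r) && P j)] j)); last first.
  by move=> i ne; rewrite !ffunE in_cons (negbTE ne).
rewrite !ffunE eqxx in_cons eqxx (negbTE xr) Px /=.
by case: (k x) => [|[|n]].
Qed.

Definition ind m (S : {set 'I_m}) : multi m := [ffun j => nat_of_bool (j \in S)].

Lemma prodvar_val m (S : {set 'I_m}) k :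
  (\big[@fps_mul m/fps_one m]_(i in S) @fps_var m i) k = (k == ind S)%:R.
Proof.
rewrite prodvar_gen ?index_enum_uniq //; congr (_%:R); congr (_ == _).
by apply/ffunP => j; rewrite !ffunE mem_index_enum.
Qed.


Lemma ev_add m (e : multi m) (I : Type) (r : seq I) (P : pred I) (F : I -> fps m) :
  (\big[@fps_add m/fps_zero m]_(i <- r | P i) F i) e = \sum_(i <- r | P i) F i e.
Proof. by apply: (big_morph (fun f : fps m => f e)). Qed.

Lemma ind_eq m (e : multi m) (S : {set 'I_m}) : [forall i, (e i <= 1)%N] ->
  (e == ind S) = (S == supp e).
Proof.
move=> /forallP H; apply/eqP/eqP => [E|->].
  by apply/setP => i; rewrite E !inE ffunE; case: (i \in S).
apply/ffunP => i; rewrite ffunE inE; have := H i; by case: (e i) => [|[|]].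
Qed.

Lemma ind_le1 m (S : {set 'I_m}) : [forall i, (ind S i <= 1)%N].
Proof. by apply/forallP => i; rewrite ffunE; case: (i \in S). Qed.

Lemma inner_val m (e : multi m) l :
  \sum_(S : {set 'I_m} | #|S| == l) ((e == ind S)%:R : int) =
  ([forall i, (e i <= 1)%N] && (#|supp e| == l))%:R.
Proof.
case H: [forall i, (e i <= 1)%N]; last first.
  rewrite big1 // => S _; case: eqP => // ES.
  by rewrite ES ind_le1 in H.
case E: (#|supp e| == l) => /=.
  rewrite (bigD1 (supp e)) //= big1 ?addr0; first by rewrite ind_eq // eqxx.
  by move=> S /andP[_ ne]; rewrite ind_eq // (negbTE ne).
  rewrite big1 // => S SE; rewrite ind_eq //; case: eqP => // ES.
  by rewrite -ES SE in E.
Qed.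

Lemma sum_pick (F : nat -> int) (r : seq nat) c : uniq r ->
  \sum_(l <- r) F l * (c == l)%:R = if c \in r then F c else 0.
Proof.
elim: r => [|x r IH] /=; first by rewrite big_nil.
case/andP => xr ur; rewrite big_cons IH // in_cons.
case: (c =P x) => [->|ne] /=; last by rewrite mulr0 add0r.
by rewrite (negbTE xr) mulr1 addr0.
Qed.

Lemma R_val m (e : multi m) :
  R_series m e = if [forall i, (e i <= 1)%N] then 1 - 2 * (#|supp e|)%:R else 0.
Proof.
rewrite /R_series {1}/fps_add {1}/fps_scale ev_add.
under eq_bigr => l _ do rewrite /fps_scale ev_add.
under eq_bigr => l _ do under eq_bigr => S _ do rewrite prodvar_val.
under eq_bigr => l _ do rewrite inner_val.
have cm : (#|supp e| <= m)%N by rewrite -[X in (_ <= X)%N]card_ord max_card.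
case: ifP => H; last first.
  rewrite big1 ?mulr0 ?addr0; last by move=> l _; rewrite /= mulr0.
  rewrite fps_one_val; case: eqP => // E; move: H; rewrite E; case/negP.
  by apply/forallP => i; rewrite ffunE.
under eq_bigr => l _ do rewrite andTb.
rewrite sum_pick ?iota_uniq // mem_index_iota ltnS cm andbT fps_one_val.
have -> : (e == [ffun _ => 0%N]) = (#|supp e| == 0%N).
  rewrite cards_eq0; apply/eqP/eqP => [->|E]; first by apply/setP => i; rewrite !inE ffunE.
  apply/ffunP => i; rewrite ffunE; apply/eqP; rewrite -leqn0 leqNgt; apply/negP => ei.
  by have : i \in supp e; [rewrite inE | rewrite E inE].
case: (#|supp e|) => [|c] /=; first by ring.
have -> : (2 * c.+1 - 1)%N = (2 * c + 1)%N by rewrite mulnS subn1 /= addn1.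
rewrite natrD natrM -[c.+1]addn1 natrD /=; ring.
Qed.


Lemma Delta_val m (k : multi m) : Delta m k = (Dt k)%:R.
Proof.
rewrite /Delta /Dt /Dn cardsE -sum1_card big_mkcond /=; congr (_%:R).
apply: eq_bigr => w _.
change ((if reduced w && [forall i, occ i w == k i] then 1%N else 0%N) = reduced w && (occv w == k)).
rewrite eq_multi.
have -> : [forall j, occv w j == k j] = [forall i, occ i w == k i].
  by apply: eq_forallb => i; rewrite ffunE.
by case: (_ && _).
Qed.

Lemma supp_ind m (S : {set 'I_m}) : supp (ind S) = S.
Proof. by apply/setP => i; rewrite !inE ffunE; case: (i \in S). Qed.

Lemma main_sum m (k : multi m) :
  fps_mul (Delta m) (R_series m) k =
  \sum_(S : {set 'I_m} | S \subset supp k) (Dt (sub k S))%:R * (1 - 2 * (#|S|)%:R).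
Proof.
rewrite /fps_mul.
rewrite (bigID (fun j : {ffun 'I_m -> 'I_(mdeg k).+1} => [forall i, (k i - j i <= 1)%N])) /=.
rewrite [X in _ + X]big1 ?addr0; last first.
  move=> j /andP[_ H]; rewrite R_val; case: ifP; rewrite ?mulr0 // => H'.
  case/negP: H; apply/forallP => i; move/forallP: H' => /(_ i); rewrite ffunE //.
pose h := fun S : {set 'I_m} => [ffun i => (inord (k i - (i \in S)) : 'I_(mdeg k).+1)].
have hE S i : (h S i : nat) = (k i - (i \in S))%N.
  rewrite ffunE inordK // ltnS; apply: leq_trans (leq_subr _ _) (le_mdeg k i).
rewrite (reindex_onto h (fun j => [set i | (j i < k i)%N])); last first.
  move=> j /andP[/forallP le /forallP le1]; apply/ffunP => i; apply: ord_inj.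
  rewrite hE inE; have := le i; have := le1 i; case: ltnP => /=; lia.
clearbody h.
have FE : forall S : {set 'I_m}, ([forall i, (h S i <= k i)%N] && [forall i, (k i - h S i <= 1)%N] &&
  ([set i | (h S i < k i)%N] == S)) = (S \subset supp k).
  move=> S.
  have -> : [forall i, (h S i <= k i)%N] by apply/forallP => i; rewrite hE leq_subr.
  have -> : [forall i, (k i - h S i <= 1)%N] by apply/forallP => i; rewrite hE; lia.
  rewrite /=; apply/eqP/idP => [<-|SU].
    by apply/subsetP => i; rewrite !inE hE; case: (i \in S) => /=; case: ltnP; lia.
  apply/setP => i; rewrite !inE hE; case iS: (i \in S) => /=; last by rewrite subn0 ltnn.
  have : i \in supp k by apply: (subsetP SU).
  rewrite inE; lia.
rewrite (eq_bigl _ _ FE); apply: eq_bigr => S SU.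
have -> : [ffun i => (h S i : nat)] = sub k S by apply/ffunP => i; rewrite !ffunE hE.
have -> : [ffun i => (k i - h S i)%N] = ind S.
  apply/ffunP => i; rewrite !ffunE hE.
  case iS: (i \in S) => /=; last by rewrite subn0 subnn.
  have : i \in supp k by apply: (subsetP SU).
  rewrite inE; lia.
by rewrite Delta_val R_val ind_le1 supp_ind.
Qed.

Theorem proposition2 (m : nat) (hm : (2 <= m)%N) :
  forall k : multi m, fps_mul (Delta m) (R_series m) k = numer m k.
Proof.
move=> k; rewrite main_sum numer_val.
have E := nat_main k.
rewrite (eq_bigr (fun S : {set 'I_m} => (Dt (sub k S))%:R - 2 * ((#|S| * Dt (sub k S))%N)%:R)); last first.
  by move=> S _; rewrite natrM; ring.
rewrite sumrB -mulr_sumr -!natr_sum -E natrD natrM; ring.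
Qed.
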